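(* Suppose Assumptions 3.2, 4.2 and 4.3 hold. Then there exist constants $0<a_*<b_*<\infty$, a constant $l_0>0$, and a function $w_0\in C^1((0,\infty))$ such that $$\tfrac12\sigma^2(x)w_0'(x)+\mu(x)w_0(x)+h(x)=l_0,\quad x\in(a_*,b_* ),$$ $c_1\le w_0(x)\le c_2$ for $x\in(a_*,b_* )$; $w_0(x)=c_2$, $w_0'(x)=0$ for $x\le a_*$; and $w_0(x)=c_1$, $w_0'(x)=0$ for $x\ge b_*$.
   Context: Standing setup. $W$ is a standard one-dimensional Brownian motion. $\mu,\sigma:[0,\infty)\to\mathbb R$ are continuous with $\sigma(x)>0$ for $x>0$, such that the SDE $dX_0(s)=\mu(X_0(s))ds+\sigma(X_0(s))dW(s)$ has a weak solution unique in law with state space $[0,\infty)$, for which $0$ is an unattainable (entrance or natural) boundary point and $\infty$ is a natural boundary point. The scale and speed densities are $s(x)=\exp\{-\int_1^x \frac{2\mu(y)}{\sigma^2(y)}dy\}$ and $m(x)=\frac{1}{\sigma^2(x)s(x)}$ for $x>0$. The generator is $\mathcal Lf(x)=\frac12\sigma^2(x)f''(x)+\mu(x)f'(x)$. Fix constants $0<c_1<c_2$ and a nonnegative continuous function $h$ on $[0,\infty)$. A control is an adapted càdlàg process $\varphi=\xi-\eta$, where $\xi,\eta$ are nonnegative, nondecreasing, càdlàg, $\xi(0-)=\eta(0-)=0$, and the measures $d\xi,d\eta$ are mutually singular; it is admissible if the controlled equation $dX(s)=\mu(X(s))ds+\sigma(X(s))dW(s)+d\xi(s)-d\eta(s)$,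 $X(0-)=x\ge0$, has a unique nonnegative weak solution $X$. For $x\ge0$, $\mathscr A_x$ is the set of admissible controls with $\mathbb E_x[\xi(T)]\le K_1(x)T^n+K_2(x)$ for all $T>0$, where $K_1,K_2$ are fixed positive functions and $n\ge1$ a fixed integer. Define $V_r(x)=\sup_{\varphi\in\mathscr A_x}\mathbb E_x\big[\int_0^\infty e^{-rs}(h(X(s))ds+c_1d\eta(s)-c_2d\xi(s))\big]$ for $r>0$. Assumption 3.2: (i) $\lim_{x\downarrow0}[h(x)+c_2\mu(x)]\le0$ and $\lim_{x\to\infty}[h(x)+c_1\mu(x)]<0$; (ii) there exist $0<a<b<\infty$ with $\int_a^bh(y)m(y)dy+\frac{c_1}{2s(b)}-\frac{c_2}{2s(a)}>0$. Assumption 4.2: For each $r>0$ there exist $0<a_r<b_r<\infty$ such that $V_r\in C^2([0,\infty))$ and: for $x\in(a_r,b_r)$, $rV_r(x)-\mathcal LV_r(x)-h(x)=0$ and $c_1\le V_r'(x)\le c_2$; for $x\ge b_r$, $rV_r(x)-\mathcal LV_r(x)-h(x)\ge0$ and $V_r'(x)=c_1$; for $x\le a_r$, $rV_r(x)-\mathcal LV_r(x)-h(x)\ge0$ and $V_r'(x)=c_2$. Assumption 4.3: $h,\mu,\sigma$ are continuously differentiable and $\inf_{x\in[a,b]}\sigma^2(x)>0$ for every $[a,b]\subset(0,\infty)$. *)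

(* Defs.v *)
From Stdlib Require Import Reals.
From Coquelicot Require Import Coquelicot.
Open Scope R_scope.

Definition scale_dens (mu sigma : R -> R) (x : R) : R :=
  exp (- RInt (fun y => 2 * mu y / (sigma y ^ 2)) 1 x).

Definition speed_dens (mu sigma : R -> R) (x : R) : R :=
  / (sigma x ^ 2 * scale_dens mu sigma x).

Definition gen (mu sigma f : R -> R) (x : R) : R :=
  / 2 * sigma x ^ 2 * Derive_n f 2 x + mu x * Derive f x.

Definition diverges_at_0 (F : R -> R) : Prop :=
  forall M : R, exists e : R, 0 < e < 1 /\ RInt F e 1 > M.
Definition diverges_at_infty (F : R -> R) : Prop :=
  forall M : R, exists T : R, 1 < T /\ RInt F 1 T > M.

(* Feller's test: 0 is unattainable (entrance or natural). *)
Definition zero_unattainable (mu sigma : R -> R) : Prop :=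
  diverges_at_0 (fun y => scale_dens mu sigma y * RInt (speed_dens mu sigma) y 1).

(* Feller's test: +oo is a natural boundary. *)
Definition infty_natural (mu sigma : R -> R) : Prop :=
  diverges_at_infty (fun y => scale_dens mu sigma y * RInt (speed_dens mu sigma) 1 y) /\
  diverges_at_infty (fun y => speed_dens mu sigma y * RInt (scale_dens mu sigma) 1 y).

Definition C1_R (g : R -> R) : Prop :=
  (forall x, ex_derive g x) /\ (forall x, continuous (Derive g) x).
Definition C2_R (g : R -> R) : Prop :=
  (forall x, ex_derive g x) /\ (forall x, ex_derive (Derive g) x) /\
  (forall x, continuous (Derive_n g 2) x).

(* f is C^1 on [0,oo) (one-sided at 0): f agrees on [0,oo) with a C^1 function on R. *)
Definition C1_nonneg (f : R -> R) : Prop :=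
  exists g : R -> R, C1_R g /\ forall x, 0 <= x -> g x = f x.

Definition C1_pos (f : R -> R) : Prop :=
  forall x, 0 < x -> ex_derive f x /\ continuous (Derive f) x.

Definition standing_setup (mu sigma : R -> R) : Prop :=
  (forall x, 0 <= x -> continuous mu x) /\
  (forall x, 0 <= x -> continuous sigma x) /\
  (forall x, 0 < x -> 0 < sigma x) /\
  zero_unattainable mu sigma /\ infty_natural mu sigma.

Definition assumption_3_2 (mu sigma h : R -> R) (c1 c2 : R) : Prop :=
  (* (i) lim_{x->0+} [h + c2 mu] <= 0 (h, mu continuous at 0) *)
  h 0 + c2 * mu 0 <= 0 /\
  (exists L : Rbar, is_lim (fun x => h x + c1 * mu x) p_infty L /\ Rbar_lt L 0) /\
  (exists a b : R, 0 < a < b /\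
     RInt (fun y => h y * speed_dens mu sigma y) a b
       + c1 / (2 * scale_dens mu sigma b) - c2 / (2 * scale_dens mu sigma a) > 0).

(* V_r in C^2([0,oo)) is expressed via a C^2 function g on R agreeing with V_r on
   [0,oo); derivatives at points of [0,oo) are those of g (one-sided at 0). *)
Definition assumption_4_2 (mu sigma h : R -> R) (c1 c2 : R) (V : R -> R -> R) : Prop :=
  forall r : R, 0 < r ->
  exists ar br : R, exists g : R -> R,
    0 < ar < br /\ C2_R g /\ (forall x, 0 <= x -> g x = V r x) /\
    (forall x, ar < x < br ->
       r * g x - gen mu sigma g x - h x = 0 /\ c1 <= Derive g x <= c2) /\
    (forall x, br <= x ->
       r * g x - gen mu sigma g x - h x >= 0 /\ Derive g x = c1) /\
    (forall x, 0 <= x <= ar ->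
       r * g x - gen mu sigma g x - h x >= 0 /\ Derive g x = c2).

Definition assumption_4_3 (mu sigma h : R -> R) : Prop :=
  C1_nonneg h /\ C1_nonneg mu /\ C1_nonneg sigma /\
  forall a b : R, 0 < a < b ->
    exists d : R, 0 < d /\ forall x, a <= x <= b -> d <= sigma x ^ 2.

(* Main.v *)
Require Import Defs.
From Stdlib Require Import Reals Lra Psatz ClassicalEpsilon Classical.
From Coquelicot Require Import Coquelicot.
Open Scope R_scope.

Lemma loc_ball x d : 0 < d -> locally x (fun t => Rabs (t - x) < d).
Proof. intros Hd. exists (mkposreal d Hd). intros t Ht. exact Ht. Qed.

Lemma cont_loc (k g : R -> R) t0 d0 : 0 < d0 -> continuity_pt g t0 -> g t0 = k t0 ->
  (forall t, Rabs (t - t0) < d0 -> k t = g t \/ k t = k t0) -> continuity_pt k t0.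
Proof.
  intros Hd Hg Heq Hl. apply continuity_pt_locally. intros eps.
  apply continuity_pt_locally with (eps:=eps) in Hg.
  eapply filter_imp; [|apply filter_and; [apply (loc_ball t0 d0 Hd) | exact Hg]].
  intros t [H1 H2]. destruct (Hl t H1) as [E|E]; rewrite E.
  - rewrite <- Heq. exact H2.
  - rewrite Rminus_diag, Rabs_R0. apply cond_pos.
Qed.

Lemma incr_strict F F' u v : u < v -> (forall t, u <= t <= v -> is_derive F t (F' t)) ->
  (forall t, u < t < v -> 0 < F' t) -> F u < F v.
Proof.
  intros Huv Hd Hp. destruct (MVT_cor2 F F' u v Huv) as [c [Hc1 Hc2]].
  intros c Hc; apply is_derive_Reals; auto.
  specialize (Hp c Hc2). nra.
Qed.

Lemma decr_le F F' u v : u <= v -> (forall t, u <= t <= v -> is_derive F t (F' t)) ->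
  (forall t, u < t < v -> F' t <= 0) -> F v <= F u.
Proof.
  intros Huv Hd Hp. destruct (Req_dec u v) as [->|Hne]; [lra|].
  destruct (MVT_cor2 F F' u v) as [c [Hc1 Hc2]]; [lra| |].
  intros c Hc; apply is_derive_Reals; auto.
  specialize (Hp c Hc2). nra.
Qed.

Lemma const_eq F F' u v : u <= v -> (forall t, u <= t <= v -> is_derive F t (F' t)) ->
  (forall t, u < t < v -> F' t = 0) -> F u = F v.
Proof.
  intros Huv Hd Hp. destruct (Req_dec u v) as [->|Hne]; [lra|].
  destruct (MVT_cor2 F F' u v) as [c [Hc1 Hc2]]; [lra| |].
  intros c Hc; apply is_derive_Reals; auto.
  specialize (Hp c Hc2). rewrite Hp in Hc1. lra.
Qed.

Lemma fermat F F' a b c : a < c -> c < b -> is_derive F c (F' c) ->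
  (forall x, a < x -> x < b -> F x <= F c) -> F' c = 0.
Proof.
  intros Hac Hcb Hd Hm.
  assert (pr : derivable_pt F c). { exists (F' c). apply is_derive_Reals. exact Hd. }
  pose proof (deriv_maximum F a b c pr Hac Hcb Hm) as H.
  rewrite <- H. symmetry. apply derive_pt_eq_0. apply is_derive_Reals. exact Hd.
Qed.

Lemma deriv_RInt1 (g : R -> R) x : 0 < x -> (forall y, 0 < y -> continuous g y) ->
  is_derive (fun x => RInt g 1 x) x (g x).
Proof.
  intros Hx Hg. apply is_derive_RInt with (a:=1).
  - assert (Hp : 0 < x/2) by lra. exists (mkposreal _ Hp). intros y Hy.
    change (Rabs (y - x) < x/2) in Hy. apply Rabs_def2 in Hy.
    apply RInt_correct. apply ex_RInt_continuous. intros z Hz. apply Hg.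
    assert (0 < Rmin 1 y) by (apply Rmin_glb_lt; lra). lra.
  - apply Hg; auto.
Qed.

Lemma Rmax_facts al b : al <= Rmax al b /\ b <= Rmax al b /\ (Rmax al b = al \/ Rmax al b = b).
Proof. unfold Rmax; destruct (Rle_dec al b); lra. Qed.

Lemma evt2 (P g : R -> R) al be : al <= be ->
  (forall x, al <= x -> continuity_pt g x) -> (forall x, al <= x <= be -> continuity_pt P x) ->
  exists a b, al <= a /\ a <= b /\ b <= be /\
    forall a' b', al <= a' /\ a' <= b' /\ b' <= be -> P b' + g a' <= P b + g a.
Proof.
  intros Hab Hg HP.
  assert (ex : forall b, exists t, (forall u, al <= u <= Rmax al b -> g u <= g t) /\ al <= t <= Rmax al b).
  { intros b. apply continuity_ab_maj. apply Rmax_l. intros c Hc. apply Hg. lra. }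
  set (tm := fun b => proj1_sig (constructive_indefinite_description _ (ex b))).
  assert (tmP : forall b, (forall u, al <= u <= Rmax al b -> g u <= g (tm b)) /\ al <= tm b <= Rmax al b).
  { intros b. unfold tm. destruct (constructive_indefinite_description _ (ex b)) as [t Ht]. exact Ht. }
  set (F := fun b => g (tm b)).
  assert (Fc : forall b0, continuity_pt F b0).
  { intros b0. apply continuity_pt_locally. intros eps.
    set (c0 := Rmax al b0).
    destruct (Rmax_facts al b0) as [Hc1 [Hc2 Hc3]]. fold c0 in Hc1, Hc2, Hc3.
    assert (He2 : 0 < eps/2) by (destruct eps; simpl; lra).
    pose proof (proj1 (continuity_pt_locally g c0) (Hg c0 Hc1) (mkposreal _ He2)) as [d Hd].
    exists d. intros b Hb. change (Rabs (b - b0) < d) in Hb.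
    assert (Hd' : forall u, Rabs (u - c0) < d -> Rabs (g u - g c0) < eps/2).
    { intros u Hu. apply (Hd u). exact Hu. }
    apply Rabs_def2 in Hb. destruct Hb as [Hb1 Hb2].
    destruct (Rmax_facts al b) as [Hm1 [Hm2 Hm3]].
    destruct (tmP b) as [Hmax Hrng]. destruct (tmP b0) as [Hmax0 Hrng0].
    fold c0 in Hmax0, Hrng0.
    unfold F.
    assert (Up : g (tm b) <= g (tm b0) + eps/2).
    { destruct (Rle_dec (tm b) c0) as [Hle|Hgt].
      - assert (g (tm b) <= g (tm b0)) by (apply Hmax0; lra). lra.
      - assert (Rabs (tm b - c0) < d) by (apply Rabs_def1; lra).
        pose proof (Hd' _ H) as H1. apply Rabs_def2 in H1.
        assert (g c0 <= g (tm b0)) by (apply Hmax0; lra). lra. }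
    assert (Lo : g (tm b0) - eps < g (tm b)).
    { destruct (Rle_dec (tm b0) (Rmax al b)) as [Hle|Hgt].
      - assert (g (tm b0) <= g (tm b)) by (apply Hmax; lra).
        destruct eps; simpl in *; lra.
      - assert (Rabs (tm b0 - c0) < d) by (apply Rabs_def1; lra).
        assert (Rabs (Rmax al b - c0) < d) by (apply Rabs_def1; lra).
        pose proof (Hd' _ H) as H1. apply Rabs_def2 in H1.
        pose proof (Hd' _ H0) as H2. apply Rabs_def2 in H2.
        assert (g (Rmax al b) <= g (tm b)) by (apply Hmax; lra). lra. }
    apply Rabs_def1; lra. }
  destruct (continuity_ab_maj (fun b => P b + F b) al be Hab) as [bs [Hbs1 Hbs2]].
  { intros c Hc. apply continuity_pt_plus; auto. }
  exists (tm bs), bs. destruct (tmP bs) as [Hmx Hr].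
  destruct (Rmax_facts al bs) as [Hm1 [Hm2 Hm3]].
  assert (al <= tm bs /\ tm bs <= bs) by (destruct Hm3 as [E|E]; rewrite E in Hr; lra).
  split; [lra|split;[lra|split;[lra|]]].
  intros a' b' Hab'.
  specialize (Hbs1 b' ltac:(lra)). simpl in Hbs1. unfold F in Hbs1.
  destruct (tmP b') as [Hmx' _].
  destruct (Rmax_facts al b') as [_ [Hn2 _]].
  assert (g a' <= g (tm b')) by (apply Hmx'; lra). lra.
Qed.

Lemma isd_plus f g x df dg : is_derive f x df -> is_derive g x dg -> is_derive (fun t => f t + g t) x (df + dg).
Proof. intros; apply (is_derive_plus f g); auto. Qed.
Lemma isd_minus f g x df dg : is_derive f x df -> is_derive g x dg -> is_derive (fun t => f t - g t) x (df - dg).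
Proof. intros; apply (is_derive_minus f g); auto. Qed.
Lemma isd_mult f g x df dg : is_derive f x df -> is_derive g x dg -> is_derive (fun t => f t * g t) x (df * g x + f x * dg).
Proof. intros; apply (is_derive_mult f g); auto. intros; apply Rmult_comm. Qed.
Lemma isd_scal f x k df : is_derive f x df -> is_derive (fun t => k * f t) x (k * df).
Proof. intros; apply is_derive_scal; auto. Qed.
Lemma isd_const (c : R) x : is_derive (fun _ => c) x 0.
Proof. apply (is_derive_const c x). Qed.
Lemma isd_inv f x df : is_derive f x df -> f x <> 0 -> is_derive (fun t => / f t) x (- df / f x ^ 2).
Proof. intros; apply is_derive_inv; auto. Qed.
Lemma isd_exp f x df : is_derive f x df -> is_derive (fun t => exp (f t)) x (df * exp (f x)).
Proof. intros H. apply (is_derive_comp exp f x (exp (f x)) df). apply is_derive_exp. exact H. Qed.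

Lemma cc_plus (f g : R -> R) (x : R) : continuous f x -> continuous g x -> continuous (fun t => f t + g t) x.
Proof. intros; apply (continuous_plus f g); auto. Qed.
Lemma cc_opp (f : R -> R) (x : R) : continuous f x -> continuous (fun t => - f t) x.
Proof. intros; apply (continuous_opp f); auto. Qed.
Lemma cc_minus (f g : R -> R) (x : R) : continuous f x -> continuous g x -> continuous (fun t => f t - g t) x.
Proof. intros; apply (continuous_minus f g); auto. Qed.
Lemma cc_mult (f g : R -> R) (x : R) : continuous f x -> continuous g x -> continuous (fun t => f t * g t) x.
Proof. intros; apply (continuous_mult f g); auto. Qed.
Lemma cc_const (c : R) (x : R) : @continuous R_UniformSpace R_UniformSpace (fun _ : R => c) x.
Proof. apply continuous_const. Qed.
Lemma cc_inv (f : R -> R) (x : R) : continuous f x -> f x <> 0 -> continuous (fun t => / f t) x.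
Proof. intros; apply continuous_Rinv_comp; auto. Qed.
Lemma cc_pow2 (f : R -> R) (x : R) : continuous f x -> continuous (fun t => f t ^ 2) x.
Proof. intros H. apply (continuous_ext (fun t => f t * f t)); [intros t; simpl; ring | apply cc_mult; auto]. Qed.
Lemma cc_div (f g : R -> R) (x : R) : continuous f x -> continuous g x -> g x <> 0 -> continuous (fun t => f t / g t) x.
Proof. intros. apply cc_mult; auto. apply cc_inv; auto. Qed.
Lemma isd_cont (f : R -> R) (x df : R) : is_derive f x df -> continuous f x.
Proof. intros H. apply (@ex_derive_continuous R_AbsRing R_NormedModule). exists df. exact H. Qed.

Lemma exRI (g : R -> R) u v : 0 < u -> 0 < v -> (forall y, 0 < y -> continuous g y) -> ex_RInt g u v.
Proof.
  intros Hu Hv Hg. apply (@ex_RInt_continuous R_CompleteNormedModule). intros z Hz. apply Hg.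
  assert (0 < Rmin u v) by (apply Rmin_glb_lt; lra). lra.
Qed.

Lemma cpt (f : R -> R) x : continuous f x -> continuity_pt f x.
Proof. intros H. apply continuity_pt_filterlim. exact H. Qed.
Lemma ptc (f : R -> R) x : continuity_pt f x -> continuous f x.
Proof. intros H. apply continuity_pt_filterlim. exact H. Qed.

Lemma isd_lin3 (A B C : R -> R) x dA dB dC k1 k2 k3 :
  is_derive A x dA -> is_derive B x dB -> is_derive C x dC ->
  is_derive (fun t => k1 * A t + k2 * B t + k3 * C t) x (k1 * dA + k2 * dB + k3 * dC).
Proof. intros. apply isd_plus; [apply isd_plus|]; apply isd_scal; auto. Qed.

Lemma isd_val (f : R -> R) x d d' : Rminus d d' = 0 -> is_derive f x d -> is_derive f x d'.
Proof. intros E. replace d' with d by lra. auto. Qed.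

Lemma eqR (a b : R) : a - b = 0 -> a = b.
Proof. intros; lra. Qed.
Theorem lemma4p9 (mu sigma h : R -> R) (c1 c2 : R) (V : R -> R -> R) :
  standing_setup mu sigma ->
  0 < c1 -> c1 < c2 ->
  (forall x, 0 <= x -> 0 <= h x) ->
  (forall x, 0 <= x -> continuous h x) ->
  assumption_3_2 mu sigma h c1 c2 ->
  assumption_4_2 mu sigma h c1 c2 V ->
  assumption_4_3 mu sigma h ->
  exists astar bstar l0 : R, exists w0 : R -> R,
    0 < astar /\ astar < bstar /\ 0 < l0 /\ C1_pos w0 /\
    (forall x, astar < x < bstar ->
       / 2 * sigma x ^ 2 * Derive w0 x + mu x * w0 x + h x = l0 /\
       c1 <= w0 x <= c2) /\
    (forall x, 0 < x <= astar -> w0 x = c2 /\ Derive w0 x = 0) /\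
    (forall x, bstar <= x -> w0 x = c1 /\ Derive w0 x = 0).
Proof.
intros Hstd Hc1 Hc12 Hh0 Hhc H32 H42 H43. clear H42 H43.
destruct Hstd as [Hmuc [Hsigc [Hsigp _]]].
destruct H32 as [H0 [[Linf [Hlim HL]] [a0 [b0 [[Ha0 Hab0] HN]]]]].
assert (Hs2 : forall y, 0 < y -> 0 < sigma y ^ 2) by (intros y Hy; specialize (Hsigp y Hy); nra).
assert (Hs2n : forall y, 0 < y -> sigma y ^ 2 <> 0) by (intros y Hy; specialize (Hs2 y Hy); lra).
assert (Hmuc' : forall y, 0 < y -> continuous mu y) by (intros; apply Hmuc; lra).
assert (Hsigc' : forall y, 0 < y -> continuous sigma y) by (intros; apply Hsigc; lra).
assert (Hhc' : forall y, 0 < y -> continuous h y) by (intros; apply Hhc; lra).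
set (f := fun y => 2 * mu y / (sigma y ^ 2)).
assert (fc : forall y, 0 < y -> continuous f y).
{ intros y Hy. unfold f. apply cc_div; auto. apply cc_mult; auto. apply cc_const. apply cc_pow2; auto. }
set (I := fun x => RInt f 1 x).
set (E := fun x => exp (I x)).
assert (Id : forall x, 0 < x -> is_derive I x (f x)) by (intros; apply deriv_RInt1; auto).
assert (Ed : forall x, 0 < x -> is_derive E x (f x * E x)) by (intros; apply isd_exp; auto).
assert (Ep : forall x, 0 < E x) by (intros; apply exp_pos).
assert (Ec : forall x, 0 < x -> continuous E x) by (intros x Hx; exact (isd_cont _ _ _ (Ed x Hx))).
set (m := speed_dens mu sigma).
assert (scE : forall x, scale_dens mu sigma x = / E x).
{ intros x. unfold scale_dens, E, I. fold f. rewrite exp_Ropp. reflexivity. }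
assert (mE : forall x, m x = E x / sigma x ^ 2).
{ intros x. unfold m, speed_dens. rewrite scE. rewrite Rinv_mult, Rinv_inv. unfold Rdiv. ring. }
assert (mp : forall x, 0 < x -> 0 < m x).
{ intros x Hx. rewrite mE. apply Rdiv_lt_0_compat; auto. }
assert (mc : forall x, 0 < x -> continuous m x).
{ intros x Hx. apply (continuous_ext (fun x => E x / sigma x ^ 2)). intros; symmetry; apply mE.
  apply cc_div; auto. apply cc_pow2; auto. }
assert (fEm : forall x, 0 < x -> f x * E x = 2 * mu x * m x).
{ intros x Hx. rewrite mE. unfold f. field. specialize (Hsigp x Hx). lra. }
set (hm := fun x => h x * m x).
assert (hmc : forall x, 0 < x -> continuous hm x) by (intros; apply cc_mult; auto).
set (H := fun x => RInt hm 1 x). set (M := fun x => RInt m 1 x).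
assert (Hd : forall x, 0 < x -> is_derive H x (hm x)) by (intros; apply deriv_RInt1; auto).
assert (Md : forall x, 0 < x -> is_derive M x (m x)) by (intros; apply deriv_RInt1; auto).
set (Pb := fun l b => 1 * H b + (- l) * M b + (c1/2) * E b).
set (ga := fun l a => (-1) * H a + l * M a + (-c2/2) * E a).
set (Psi := fun l a b => Pb l b + ga l a).
assert (PsiE : forall l a b, Psi l a b = H b - H a - l * (M b - M a) + (c1 * E b - c2 * E a) / 2).
{ intros. unfold Psi, Pb, ga. field. }
assert (Psida : forall l a b, 0 < a -> is_derive (fun a => Psi l a b) a (m a * (l - h a - c2 * mu a))).
{ intros l a b Ha.
  assert (D1 := isd_lin3 H M E a _ _ _ (-1) l (-c2/2) (Hd a Ha) (Md a Ha) (Ed a Ha)).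
  assert (D2 := isd_plus (fun _ => Pb l b) (ga l) a _ _ (isd_const (Pb l b) a) D1).
  eapply isd_val; [|eapply is_derive_ext;[|exact D2]; intros; reflexivity].
  rewrite fEm by auto. unfold hm. field. }
assert (Psidb : forall l a b, 0 < b -> is_derive (fun b => Psi l a b) b (m b * (h b + c1 * mu b - l))).
{ intros l a b Hb.
  assert (D1 := isd_lin3 H M E b _ _ _ 1 (-l) (c1/2) (Hd b Hb) (Md b Hb) (Ed b Hb)).
  assert (D2 := isd_plus (Pb l) (fun _ => ga l a) b _ _ D1 (isd_const (ga l a) b)).
  eapply isd_val; [|eapply is_derive_ext;[|exact D2]; intros; reflexivity].
  rewrite fEm by auto. unfold hm. field. }

assert (Mlt : forall a b, 0 < a -> a < b -> M a < M b).
{ intros a b Ha Hab. apply (incr_strict M m a b Hab).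
  - intros t Ht. apply Md. lra.
  - intros t Ht. apply mp. lra. }
assert (Mle : forall a b, 0 < a -> a <= b -> M a <= M b).
{ intros a b Ha Hab. destruct (Req_dec a b) as [->|]; [lra|]. apply Rlt_le, Mlt; lra. }
assert (HN0 : Psi 0 a0 b0 > 0).
{ assert (R1 : RInt hm a0 b0 = H b0 - H a0).
  { unfold H. rewrite <- (RInt_Chasles hm 1 a0 b0). change (plus ?x ?y) with (x + y). apply eqR. ring.
    apply exRI; auto; lra. apply exRI; auto; lra. }
  rewrite PsiE. change (RInt hm a0 b0 + c1 / (2 * scale_dens mu sigma b0) - c2 / (2 * scale_dens mu sigma a0) > 0) in HN.
  rewrite R1, !scE in HN.
  assert (E a0 > 0) by apply Ep. assert (E b0 > 0) by apply Ep.
  replace (c1 / (2 * / E b0)) with (c1 * E b0 / 2) in HN by (field; lra).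
  replace (c2 / (2 * / E a0)) with (c2 * E a0 / 2) in HN by (field; lra).
  lra. }
set (l1 := Psi 0 a0 b0 / (M b0 - M a0)).
assert (HD0 : M a0 < M b0) by (apply Mlt; lra).
assert (Hl1 : 0 < l1) by (unfold l1; apply Rdiv_lt_0_compat; lra).
assert (Hl1E : Psi l1 a0 b0 = 0).
{ rewrite PsiE. rewrite PsiE in HN0. unfold l1. rewrite PsiE. field. lra. }
assert (Hg0c : continuity_pt (fun x => h x + c2 * mu x) 0).
{ apply cpt. apply cc_plus. apply Hhc; lra. apply cc_mult. apply cc_const. apply Hmuc; lra. }
assert (Heps : 0 < l1 - (h 0 + c2 * mu 0)) by lra.
destruct (proj1 (continuity_pt_locally _ _) Hg0c (mkposreal _ Heps)) as [d Hdd].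
set (al0 := Rmin (d/2) (a0/2)).
assert (Hdp : 0 < d) by apply cond_pos.
assert (Hal0 : 0 < al0 /\ al0 < a0 /\ al0 < d).
{ unfold al0. split; [apply Rmin_glb_lt; lra|]. split.
  - apply (Rle_lt_trans _ (a0/2)); [apply Rmin_r|lra].
  - apply (Rle_lt_trans _ (d/2)); [apply Rmin_l|lra]. }
assert (Hleft : forall x, 0 < x <= al0 -> h x + c2 * mu x < l1).
{ intros x Hx. assert (Hb : Rabs (x - 0) < d) by (apply Rabs_def1; lra).
  specialize (Hdd x Hb). simpl in Hdd. apply Rabs_def2 in Hdd. lra. }
assert (Hset : Rbar_locally Linf (fun y => y < 0)).
{ destruct Linf as [l| |]; simpl in HL |- *.
  - assert (Hl : 0 < - l) by lra. exists (mkposreal _ Hl). intros y Hy.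
    change (Rabs (y - l) < - l) in Hy. apply Rabs_def2 in Hy. lra.
  - contradiction.
  - exists 0. intros; lra. }
destruct (Hlim _ Hset) as [N HNb].
set (be0 := Rmax (N + 1) (b0 + 1)).
assert (Hbe0 : N < be0 /\ b0 < be0).
{ unfold be0. unfold Rmax. destruct (Rle_dec (N+1) (b0+1)); lra. }
assert (Hright : forall x, be0 <= x -> h x + c1 * mu x < 0).
{ intros x Hx. apply (HNb x). lra. }
set (al := al0 / 2). set (be := be0 + 1).
assert (Hal : 0 < al < al0) by (unfold al; lra).
set (T := fun a b => al <= a /\ a <= b /\ b <= be).
assert (Hbe : be0 < be) by (unfold be; lra).
assert (g1c : forall x, 0 < x -> continuity_pt (fun x => h x + c1 * mu x) x).
{ intros x Hx. apply cpt. apply cc_plus. auto. apply cc_mult. apply cc_const. auto. }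
destruct (continuity_ab_maj (fun x => h x + c1 * mu x) al be) as [Mx [HMx1 HMx2]].
{ lra. } { intros c Hc. apply g1c. lra. }
set (L0 := h Mx + c1 * mu Mx).
assert (Pshift : forall l l' a b, Psi l a b = Psi l' a b - (l - l') * (M b - M a)).
{ intros. rewrite !PsiE. ring. }
assert (Pdiag : forall l a, Psi l a a = (c1 - c2) * E a / 2).
{ intros. rewrite PsiE. field. }
assert (PL0 : forall a b, T a b -> Psi L0 a b < 0).
{ intros a b [Ta [Tab Tb]].
  assert (Psi L0 a b <= Psi L0 a a).
  { apply (decr_le (fun b => Psi L0 a b) (fun b => m b * (h b + c1 * mu b - L0)) a b Tab).
    - intros t Ht. apply Psidb. lra.
    - intros t Ht. assert (0 < m t) by (apply mp; lra).
      assert (h t + c1 * mu t <= L0) by (apply (HMx1 t); lra). nra. }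
  rewrite Pdiag in H1. assert (0 < E a) by apply Ep. nra. }
set (Lset := fun l => exists a b, T a b /\ Psi l a b >= 0).
assert (Lbound : forall l, Lset l -> l <= L0).
{ intros l [a [b [HT HP]]]. destruct (Rle_dec l L0) as [|Hn]; [auto|exfalso].
  pose proof (PL0 a b HT). destruct HT as [Ta [Tab Tb]].
  assert (M a <= M b) by (apply Mle; lra).
  rewrite (Pshift l L0) in HP. nra. }
assert (Ll1 : Lset l1).
{ exists a0, b0. split. unfold T. split; [lra|split; lra]. lra. }
destruct (completeness Lset) as [lstar [Hub Hlub]].
{ exists L0. intros l Hl. apply Lbound; auto. }
{ exists l1; auto. }
assert (Hls1 : l1 <= lstar) by (apply Hub; auto).
assert (Pbd : forall l x, 0 < x -> is_derive (Pb l) x (1 * hm x + (- l) * m x + (c1/2) * (f x * E x))).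
{ intros l x Hx. apply isd_lin3; auto. }
assert (gad : forall l x, 0 < x -> is_derive (ga l) x ((-1) * hm x + l * m x + (-c2/2) * (f x * E x))).
{ intros l x Hx. apply isd_lin3; auto. }
destruct (evt2 (Pb lstar) (ga lstar) al be) as [as_ [bs [Tas [Tasbs [Tbs Hmax]]]]].
{ lra. }
{ intros x Hx. apply cpt. eapply isd_cont. apply gad. lra. }
{ intros x Hx. apply cpt. eapply isd_cont. apply Pbd. lra. }
change (forall a' b', T a' b' -> Psi lstar a' b' <= Psi lstar as_ bs) in Hmax.
set (G := Psi lstar as_ bs).
assert (HG1 : G <= 0).
{ destruct (Rle_dec G 0) as [|Hn]; [auto|exfalso].
  assert (HDn : 0 <= M bs - M as_) by (assert (M as_ <= M bs) by (apply Mle; lra); lra).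
  set (l' := lstar + G / (M bs - M as_ + 1)).
  assert (HLl : Lset l').
  { exists as_, bs. split. unfold T; lra. rewrite (Pshift l' lstar). fold G. unfold l'.
    apply Rle_ge. apply (Rmult_le_reg_r (M bs - M as_ + 1)). lra.
    replace ((G - (lstar + G / (M bs - M as_ + 1) - lstar) * (M bs - M as_)) * (M bs - M as_ + 1)) with G by (field; lra).
    lra. }
  assert (Hll : l' <= lstar) by (apply Hub; auto).
  unfold l' in Hll. assert (0 < G / (M bs - M as_ + 1)) by (apply Rdiv_lt_0_compat; lra). lra. }
assert (HG2 : 0 <= G).
{ destruct (Rle_dec 0 G) as [|Hn]; [auto|exfalso].
  set (Dm := M be - M al).
  assert (HDm : forall a b, T a b -> 0 <= M b - M a <= Dm).
  { intros a b [Ta [Tab Tb]]. unfold Dm.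
    assert (M al <= M a) by (apply Mle; lra). assert (M a <= M b) by (apply Mle; lra).
    assert (M b <= M be) by (apply Mle; lra). lra. }
  assert (HDm0 : 0 <= Dm) by (destruct (HDm al al) as [_ ?]; [unfold T; lra| lra]).
  set (l'' := lstar + G / (Dm + 1)).
  assert (Hq : G / (Dm + 1) < 0) by (apply Ropp_lt_cancel; rewrite Ropp_0; unfold Rdiv; rewrite Ropp_mult_distr_l; apply Rdiv_lt_0_compat; lra).
  assert (exists l, Lset l /\ l'' < l) as [l [[a [b [HT HP]]] Hl]].
  { apply NNPP. intros Hne. assert (lstar <= l'').
    { apply Hlub. intros l Hl. apply Rnot_lt_le. intros Hlt. apply Hne. exists l; auto. }
    unfold l'' in *. lra. }
  pose proof (Hmax a b HT) as Hm. fold G in Hm. rewrite (Pshift lstar l) in Hm.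
  destruct (HDm a b HT) as [HD1 HD2].
  assert (Hk : (lstar - l) * (M b - M a) < - G).
  { destruct (Rle_dec (lstar - l) 0). nra.
    assert (lstar - l < - (G / (Dm + 1))) by (unfold l'' in Hl; lra).
    assert (- (G / (Dm + 1)) * Dm < - G).
    { replace (- (G / (Dm + 1)) * Dm) with (- G * (Dm / (Dm + 1))) by (field; lra).
      assert (Dm / (Dm + 1) < 1) by (apply (Rmult_lt_reg_r (Dm + 1)); [lra|]; unfold Rdiv; rewrite Rmult_assoc, Rinv_l; lra).
      nra. }
    nra. }
  lra. }
assert (HG : G = 0) by lra.
assert (Has_pos : 0 < as_) by lra.
assert (Hab : as_ < bs).
{ destruct (Req_dec as_ bs) as [Heq|]; [|lra]. exfalso. unfold G in HG. rewrite Heq, Pdiag in HG.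
  assert (0 < E bs) by apply Ep. nra. }
assert (Has : al0 <= as_).
{ apply Rnot_lt_le. intros Hlt.
  set (a' := Rmin al0 bs).
  assert (Ha' : as_ < a' /\ a' <= al0 /\ a' <= bs).
  { unfold a', Rmin. destruct (Rle_dec al0 bs); lra. }
  assert (Psi lstar as_ bs < Psi lstar a' bs).
  { apply (incr_strict (fun a => Psi lstar a bs) (fun a => m a * (lstar - h a - c2 * mu a))). lra.
    - intros t Ht. apply Psida. lra.
    - intros t Ht. assert (0 < m t) by (apply mp; lra).
      assert (h t + c2 * mu t < l1) by (apply Hleft; lra). nra. }
  assert (Psi lstar a' bs <= G) by (apply Hmax; unfold T; lra). fold G in H1. lra. }
assert (Hbs : bs <= be0).
{ apply Rnot_lt_le. intros Hlt.
  set (b' := Rmax be0 as_).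
  assert (Hb' : b' < bs /\ be0 <= b' /\ as_ <= b').
  { unfold b', Rmax. destruct (Rle_dec be0 as_); lra. }
  assert (-1 * Psi lstar as_ b' < -1 * Psi lstar as_ bs).
  { apply (incr_strict (fun b => -1 * Psi lstar as_ b) (fun b => -1 * (m b * (h b + c1 * mu b - lstar)))). lra.
    - intros t Ht. apply isd_scal. apply Psidb. lra.
    - intros t Ht. assert (0 < m t) by (apply mp; lra).
      assert (h t + c1 * mu t < 0) by (apply Hright; lra). nra. }
  assert (Psi lstar as_ b' <= G) by (apply Hmax; unfold T; lra). fold G in H1. lra. }
assert (FOa : lstar = h as_ + c2 * mu as_).
{ assert (Hz : m as_ * (lstar - h as_ - c2 * mu as_) = 0).
  { apply (fermat (fun a => Psi lstar a bs) (fun a => m a * (lstar - h a - c2 * mu a)) al bs as_); try lra.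
    apply Psida; lra. intros x Hx1 Hx2. apply Hmax. unfold T; lra. }
  assert (0 < m as_) by (apply mp; lra).
  destruct (Rmult_integral _ _ Hz); lra. }
assert (FOb : lstar = h bs + c1 * mu bs).
{ assert (Hz : m bs * (h bs + c1 * mu bs - lstar) = 0).
  { apply (fermat (fun b => Psi lstar as_ b) (fun b => m b * (h b + c1 * mu b - lstar)) as_ be bs); try lra.
    apply Psidb; lra. intros x Hx1 Hx2. apply Hmax. unfold T; lra. }
  assert (0 < m bs) by (apply mp; lra).
  destruct (Rmult_integral _ _ Hz); lra. }
set (K0 := c2 * E as_ - 2 * lstar * M as_ + 2 * H as_).
set (Num := fun t => (-2) * H t + (2 * lstar) * M t + K0 * (fun _ => 1) t).
set (W := fun t => Num t * / E t).
set (kW := fun t => 2 * (lstar - h t - mu t * W t) / sigma t ^ 2).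
assert (Numd : forall x, 0 < x -> is_derive Num x ((-2) * hm x + (2 * lstar) * m x + K0 * 0)).
{ intros x Hx. apply isd_lin3; auto. apply isd_const. }
assert (Wd : forall x, 0 < x -> is_derive W x (kW x)).
{ intros x Hx. assert (Hsx := Hsigp x Hx). assert (HEx := Ep x).
  eapply isd_val; [|apply isd_mult; [apply Numd; auto | apply isd_inv; [apply Ed; auto| lra]]].
  unfold kW, W, hm. rewrite mE. unfold f. field. split; lra. }
assert (Wc : forall x, 0 < x -> continuous W x) by (intros x Hx; exact (isd_cont _ _ _ (Wd x Hx))).
assert (Wa : W as_ = c2).
{ unfold W, Num, K0. assert (HEx := Ep as_). field. lra. }
assert (Wb : W bs = c1).
{ unfold W, Num, K0. assert (HEx := Ep bs). unfold G in HG. rewrite PsiE in HG.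
  apply (Rmult_eq_reg_r (E bs)); [|lra]. rewrite Rmult_assoc, Rinv_l by lra. lra. }
assert (kWa : kW as_ = 0).
{ unfold kW. rewrite Wa. rewrite FOa. field. specialize (Hsigp as_ Has_pos). lra. }
assert (kWb : kW bs = 0).
{ unfold kW. rewrite Wb. rewrite FOb. field. specialize (Hsigp bs ltac:(lra)). lra. }
assert (kWc : forall t, 0 < t -> continuity_pt kW t).
{ intros t Ht. apply cpt. unfold kW. apply cc_div. apply cc_mult. apply cc_const.
  apply cc_minus. apply cc_minus. apply cc_const. auto. apply cc_mult; auto.
  apply cc_pow2; auto. auto. }
set (k := fun t => if Rle_dec t as_ then 0 else if Rle_dec bs t then 0 else kW t).
assert (kcases : forall t, (k t = 0 /\ (t <= as_ \/ bs <= t)) \/ (k t = kW t /\ as_ < t < bs)).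
{ intros t. unfold k. destruct (Rle_dec t as_); [left; split; auto|].
  destruct (Rle_dec bs t); [left; split; auto|]. right; split; auto; lra. }
assert (kc : forall t, continuity_pt k t).
{ intros t0.
  destruct (Rlt_dec t0 as_) as [Hlt|Hge].
  { apply (cont_loc k (fun _ => 0) t0 (as_ - t0)). lra. apply continuity_pt_const. intros u v; auto.
    destruct (kcases t0) as [[? _]|[_ ?]]; [auto|lra].
    intros t Ht. apply Rabs_def2 in Ht. left. destruct (kcases t) as [[? _]|[_ ?]]; [auto|lra]. }
  destruct (Rlt_dec bs t0) as [Hgt|Hle].
  { apply (cont_loc k (fun _ => 0) t0 (t0 - bs)). lra. apply continuity_pt_const. intros u v; auto.
    destruct (kcases t0) as [[? _]|[_ ?]]; [auto|lra].
    intros t Ht. apply Rabs_def2 in Ht. left. destruct (kcases t) as [[? _]|[_ ?]]; [auto|lra]. }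
  destruct (Req_dec t0 as_) as [Heq|Hne1].
  { apply (cont_loc k kW t0 1). lra. apply kWc; lra.
    subst t0. destruct (kcases as_) as [[-> _]|[_ ?]]; [auto|lra].
    intros t Ht. destruct (kcases t) as [[E0 _]|[E0 _]].
    - right. rewrite E0. destruct (kcases t0) as [[-> _]|[_ ?]]; [auto|lra].
    - left; auto. }
  destruct (Req_dec t0 bs) as [Heq|Hne2].
  { apply (cont_loc k kW t0 1). lra. apply kWc; lra.
    subst t0. destruct (kcases bs) as [[-> _]|[_ ?]]; [auto|lra].
    intros t Ht. destruct (kcases t) as [[E0 _]|[E0 _]].
    - right. rewrite E0. destruct (kcases t0) as [[-> _]|[_ ?]]; [auto|lra].
    - left; auto. }
  apply (cont_loc k kW t0 (Rmin (t0 - as_) (bs - t0))).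
  apply Rmin_glb_lt; lra. apply kWc; lra.
  destruct (kcases t0) as [[_ ?]|[-> _]]; [lra|auto].
  intros t Ht. left.
  assert (Rmin (t0 - as_) (bs - t0) <= t0 - as_) by apply Rmin_l.
  assert (Rmin (t0 - as_) (bs - t0) <= bs - t0) by apply Rmin_r.
  apply Rabs_def2 in Ht.
  destruct (kcases t) as [[_ ?]|[-> _]]; [lra|auto]. }
set (w0 := fun t => c2 + RInt k as_ t).
assert (kcc : forall t, continuous k t) by (intros; apply ptc; auto).
assert (w0d : forall x, is_derive w0 x (k x)).
{ intros x. eapply isd_val; [|apply isd_plus; [apply isd_const|]].
  2:{ apply (is_derive_RInt k (fun t => RInt k as_ t) as_ x).
      apply filter_forall. intros y. apply (@RInt_correct R_CompleteNormedModule).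
      apply (@ex_RInt_continuous R_CompleteNormedModule). intros; auto. auto. }
  ring. }
assert (Dw0 : forall x, Derive w0 x = k x) by (intros; apply is_derive_unique; auto).
assert (w0a : w0 as_ = c2).
{ unfold w0. rewrite RInt_point. change zero with 0. ring. }
assert (w0W : forall x, as_ <= x <= bs -> w0 x = W x).
{ intros x Hx.
  assert (w0 as_ - W as_ = w0 x - W x).
  { apply (const_eq (fun t => w0 t - W t) (fun t => k t - kW t) as_ x). lra.
    - intros t Ht. apply isd_minus; auto. apply Wd; lra.
    - intros t Ht. destruct (kcases t) as [[_ ?]|[-> _]]; [lra|apply Rminus_diag]. }
  match goal with Hq : w0 as_ - W as_ = _ |- _ => rewrite w0a, Wa in Hq end. lra. }
exists as_, bs, lstar, w0.
split; [lra|]. split; [lra|]. split; [lra|].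
split.
{ intros x Hx. split. exists (k x); auto. apply (continuous_ext k). intros; symmetry; auto. auto. }
split.
{ intros x Hx. rewrite Dw0, w0W by lra.
  destruct (kcases x) as [[_ ?]|[-> _]]; [lra|].
  split.
  - unfold kW. field. specialize (Hsigp x ltac:(lra)). lra.
  - assert (Hp1 : Psi lstar x bs <= 0) by (fold G in Hmax; rewrite <- HG; apply Hmax; unfold T; lra).
    assert (Hp2 : Psi lstar as_ x <= 0) by (fold G in Hmax; rewrite <- HG; apply Hmax; unfold T; lra).
    assert (HG' := HG). unfold G in HG'. rewrite PsiE in Hp1, Hp2, HG'.
    assert (HEx := Ep x).
    assert (HWE : W x * E x = Num x) by (unfold W; field; lra).
    unfold Num, K0 in HWE. simpl in HWE.
    split; nra. }
split.
{ intros x Hx. rewrite Dw0. destruct (kcases x) as [[-> _]|[_ ?]]; [|lra]. split; auto.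
  rewrite <- w0a. apply (const_eq w0 k x as_). lra. intros; auto.
  intros t Ht. destruct (kcases t) as [[-> _]|[_ ?]]; [auto|lra]. }
{ intros x Hx. rewrite Dw0. destruct (kcases x) as [[-> _]|[_ ?]]; [|lra]. split; auto.
  rewrite <- Wb, <- w0W by lra. symmetry. apply (const_eq w0 k bs x). lra. intros; auto.
  intros t Ht. destruct (kcases t) as [[-> _]|[_ ?]]; [auto|lra]. }
Qed.
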